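(* Let $(\mathcal{L}\subset\mathbb{R}^s,\mathbb{R}^n)$ be a generic cut-and-project scheme, let $L\in\mathbb{R}^{s\times s}$ be a matrix associated to $\mathcal{L}$, and let $\Sigma(\Omega)\subset\mathbb{R}^n$ be a cut-and-project set constructed from this scheme. If $A:\mathbb{R}^n\to\mathbb{R}^n$ is a linear map with $A\Sigma(\Omega)\subset\Sigma(\Omega)$, then $A\pi_\parallel(\mathcal{L})\subset\pi_\parallel(\mathcal{L})$ and there exist uniquely defined matrices $C\in\mathbb{Z}^{s\times s}$ and $B\in\mathbb{R}^{(s-n)\times(s-n)}$ such that $\begin{pmatrix}A&O\\O&B\end{pmatrix}L=LC$.
   Context: A lattice $\mathcal{L}\subset\mathbb{R}^s$ is $\{L\mathbf{r}:\mathbf{r}\in\mathbb{Z}^s\}$ for a non-singular $L\in\mathbb{R}^{s\times s}$ (a matrix associated to $\mathcal{L}$). For $1\le n<s$, the cut-and-project scheme $(\mathcal{L}\subset\mathbb{R}^s,\mathbb{R}^n)$ consists of $\mathcal{L}$ with projections $\pi_\parallel(\mathbf{x})=(x_1,\dots,x_n)^\top$, $\pi_\perp(\mathbf{x})=(x_{n+1},\dots,x_s)^\top$; it is generic if $\pi_\parallel|_{\mathcal{L}}$ and $\pi_\perp|_{\mathcal{L}}$ are injective and $\pi_\perp(\mathcal{L})$ is dense in $\mathbb{R}^{s-n}$. For a bounded $\Omega\subset\mathbb{R}^{s-n}$ with $\overline{\Omega^\circ}=\overline{\Omega}\neq\emptyset$, the cut-and-project set is $\Sigma(\Omega)=\{\pi_\parallel(\mathbf{l}):\mathbf{l}\in\mathcal{L},\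 \pi_\perp(\mathbf{l})\in\Omega\}$. *)

(* Defs.v *)
From HB Require Import structures.
From mathcomp Require Import all_boot all_order all_algebra.
From mathcomp Require Import all_classical all_reals all_analysis.
Set Implicit Arguments. Unset Strict Implicit. Unset Printing Implicit Defensive.
Import Order.TTheory GRing.Theory Num.Theory.
Import numFieldNormedType.Exports.
Local Open Scope classical_set_scope.
Local Open Scope ring_scope.

(* The ambient space R^s is written R^(n+m) with
   m = s - n, as column vectors 'cV[R]_(n+m); the first n coordinates form
   the "physical" space, the last m the "internal" space. *)

Definition intmx (R : realType) (p q : nat) (C : 'M[int]_(p, q)) : 'M[R]_(p, q) :=
  map_mx (fun z : int => z%:~R) C.

Definition lattice (R : realType) (s : nat) (L : 'M[R]_s) : set 'cV[R]_s :=
  [set x | exists r : 'cV[int]_s, x = L *m intmx R r].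

Definition pi_par (R : realType) (n m : nat) (x : 'cV[R]_(n + m)) : 'cV[R]_n :=
  usubmx x.
Definition pi_perp (R : realType) (n m : nat) (x : 'cV[R]_(n + m)) : 'cV[R]_m :=
  dsubmx x.

Definition generic_cps (R : realType) (n m : nat) (L : 'M[R]_(n + m)) : Prop :=
  [/\ {in lattice L &, injective (@pi_par R n m)},
      {in lattice L &, injective (@pi_perp R n m)} &
      dense (@pi_perp R n m @` lattice L)].

Definition admissible_window (R : realType) (m : nat) (W : set 'cV[R]_m) : Prop :=
  [/\ bounded_set W, closure (interior W) = closure W & closure W !=set0].

Definition cps_set (R : realType) (n m : nat) (L : 'M[R]_(n + m))
    (W : set 'cV[R]_m) : set 'cV[R]_n :=
  [set pi_par l | l in [set l | lattice L l /\ W (pi_perp l)]].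

(* Main.v *)
Require Import Defs.
From HB Require Import structures.
From mathcomp Require Import all_boot all_order all_algebra.
From mathcomp Require Import all_classical all_reals all_analysis.
From mathcomp Require Import ring lra.
Import Order.TTheory GRing.Theory Num.Theory.
Import numFieldNormedType.Exports.
Local Open Scope classical_set_scope.
Local Open Scope ring_scope.
Set Implicit Arguments. Unset Strict Implicit.


Lemma intmxD (R : realType) p q (r r' : 'M[int]_(p, q)) :
  intmx R (r + r') = intmx R r + intmx R r'.
Proof. by apply/matrixP => i j; rewrite !mxE intrD. Qed.

Lemma intmxN (R : realType) p q (r : 'M[int]_(p, q)) :
  intmx R (- r) = - intmx R r.
Proof. by apply/matrixP => i j; rewrite !mxE intrN. Qed.

Lemma intmx0 (R : realType) p q : intmx R (0 : 'M[int]_(p, q)) = 0.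
Proof. by apply/matrixP => i j; rewrite !mxE. Qed.

Lemma intmxM (R : realType) p q k (r : 'M[int]_(p, q)) (r' : 'M[int]_(q, k)) :
  intmx R (r *m r') = intmx R r *m intmx R r'.
Proof.
apply/matrixP => i j; rewrite !mxE rmorph_sum; apply: eq_bigr => l _.
by rewrite !mxE rmorphM.
Qed.

Lemma intmx_delta (R : realType) p (j : 'I_p) :
  intmx R (delta_mx j 0 : 'cV[int]_p) = delta_mx j 0.
Proof. by apply/matrixP => i k; rewrite !mxE; case: (_ && _). Qed.

Lemma col_intmx (R : realType) p q (C : 'M[int]_(p, q)) j :
  intmx R C *m delta_mx j 0 = intmx R (col j C).
Proof. by rewrite -colE; apply/matrixP => i k; rewrite !mxE. Qed.

Lemma mx_eq_cols (R : realType) p q (X Y : 'M[R]_(p, q)) :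
  (forall j, X *m (delta_mx j 0 : 'cV[R]_q) = Y *m delta_mx j 0) -> X = Y.
Proof.
move=> H; apply/matrixP => i j; have := congr1 (fun M : 'cV[R]_p => M i 0) (H j).
by rewrite -!colE !mxE.
Qed.

Lemma intmx_inj (R : realType) p q (C C' : 'M[int]_(p, q)) :
  intmx R C = intmx R C' -> C = C'.
Proof.
move=> E; apply/matrixP => i j; have := congr1 (fun M : 'M[R]_(p, q) => M i j) E.
by rewrite !mxE => /intr_inj.
Qed.

Lemma lat_add (R : realType) s (L : 'M[R]_s) x y :
  lattice L x -> lattice L y -> lattice L (x + y).
Proof. by move=> [r ->] [r' ->]; exists (r + r'); rewrite intmxD mulmxDr. Qed.

Lemma lat_opp (R : realType) s (L : 'M[R]_s) x :
  lattice L x -> lattice L (- x).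
Proof. by move=> [r ->]; exists (- r); rewrite intmxN mulmxN. Qed.

Lemma lat_sub (R : realType) s (L : 'M[R]_s) x y :
  lattice L x -> lattice L y -> lattice L (x - y).
Proof. by move=> Hx Hy; apply: lat_add => //; apply: lat_opp. Qed.

Lemma lat0 (R : realType) s (L : 'M[R]_s) : lattice L 0.
Proof. by exists 0; rewrite intmx0 mulmx0. Qed.

Lemma lat_natmul (R : realType) s (L : 'M[R]_s) x N :
  lattice L x -> lattice L (x *+ N).
Proof.
move=> Hx; elim: N => [|N IH]; first by rewrite mulr0n; exact: lat0.
by rewrite mulrS; apply: lat_add.
Qed.

Lemma lat_pt (R : realType) s (L : 'M[R]_s) r : lattice L (L *m intmx R r).
Proof. by exists r. Qed.

Lemma dense_near (R : realType) m (G : set 'cV[R]_m) : dense G ->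
  forall y e, 0 < e -> exists g, G g /\ `|y - g| < e.
Proof.
move=> D y e e0.
have [|g [bg Gg]] := D (ball y e) _ (ball_open _ _).
  by exists y; exact: ballxx.
by exists g; split => //; move: bg; rewrite -ball_normE.
Qed.

Lemma ppD (R : realType) n m (x y : 'cV[R]_(n + m)) :
  pi_par (x + y) = pi_par x + pi_par y.
Proof. exact: raddfD. Qed.
Lemma pqD (R : realType) n m (x y : 'cV[R]_(n + m)) :
  pi_perp (x + y) = pi_perp x + pi_perp y.
Proof. exact: raddfD. Qed.
Lemma ppB (R : realType) n m (x y : 'cV[R]_(n + m)) :
  pi_par (x - y) = pi_par x - pi_par y.
Proof. exact: raddfB. Qed.
Lemma pqB (R : realType) n m (x y : 'cV[R]_(n + m)) :
  pi_perp (x - y) = pi_perp x - pi_perp y.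
Proof. exact: raddfB. Qed.
Lemma pqMn (R : realType) n m (x : 'cV[R]_(n + m)) N :
  pi_perp (x *+ N) = pi_perp x *+ N.
Proof. exact: raddfMn. Qed.
Lemma pqZ (R : realType) n m (a : R) (x : 'cV[R]_(n + m)) :
  pi_perp (a *: x) = a *: pi_perp x.
Proof. exact: linearZ. Qed.
Lemma entry_le_norm (R : realType) (p q : nat) (x : 'M[R]_(p, q)) i j :
  `|x i j| <= `|x|.
Proof.
rewrite [X in _ <= X]mx_normrE.
exact: (le_bigmax 0 (fun ij : 'I_p * 'I_q => `|x ij.1 ij.2|) (i, j)).
Qed.

Lemma norm_le_entries (R : realType) (p q : nat) (x : 'M[R]_(p, q)) e :
  0 <= e -> (forall i j, `|x i j| <= e) -> `|x| <= e.
Proof.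
move=> e0 H; rewrite [X in X <= _]mx_normrE.
by apply: bigmax_le => // [[i j]] _; exact: H.
Qed.

Lemma norm_lt_entries (R : realType) (p q : nat) (x : 'M[R]_(p, q)) e :
  0 < e -> (forall i j, `|x i j| < e) -> `|x| < e.
Proof.
move=> e0 H; rewrite [X in X < _]mx_normrE.
by apply: bigmax_lt => // [[i j]] _; exact: H.
Qed.

Definition mxc {R : realType} {p q : nat} (M : 'M[R]_(p, q)) : R :=
  \sum_i \sum_j `|M i j|.

Lemma mxc_ge0 (R : realType) (p q : nat) (M : 'M[R]_(p, q)) : 0 <= mxc M.
Proof. by apply: sumr_ge0 => i _; apply: sumr_ge0 => j _. Qed.

Lemma mxc_bound (R : realType) (p q : nat) (M : 'M[R]_(p, q)) (x : 'cV[R]_q) :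
  `|M *m x| <= mxc M * `|x|.
Proof.
apply: norm_le_entries; first by rewrite mulr_ge0 // mxc_ge0.
move=> i j; rewrite !mxE (le_trans (ler_norm_sum _ _ _)) //.
apply: (@le_trans _ _ (\sum_k `|M i k| * `|x|)).
  apply: ler_sum => k _; rewrite normrM ler_wpM2l //.
  exact: entry_le_norm.
rewrite -mulr_suml ler_wpM2r //.
rewrite /mxc (bigD1 i) //= lerDl.
by apply: sumr_ge0 => i' _; apply: sumr_ge0.
Qed.
Definition frc {R : realType} (x : R) : R := x - (Num.floor x)%:~R.

Lemma frc_ge0 (R : realType) (x : R) : 0 <= frc x.
Proof. by rewrite /frc subr_ge0 floor_le. Qed.

Lemma frc_lt1 (R : realType) (x : R) : frc x < 1.
Proof. have := floorD1_gt x; rewrite intrD /frc; lra. Qed.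

Lemma trunc_close (R : realType) (x y : R) : 0 <= x -> 0 <= y ->
  Num.truncn x = Num.truncn y -> `|x - y| < 1.
Proof.
move=> x0 y0 E; have /andP[a b] := truncn_itv x0; have /andP[c d] := truncn_itv y0.
rewrite E -natr1 in a b; rewrite -natr1 in d; rewrite ltr_norml; apply/andP; split; lra.
Qed.

Lemma dirichlet_aux (R : realType) (p : nat) (v : 'cV[R]_p) (e : R) (q1 q2 : nat) :
  (q1 < q2)%N ->
  (forall i, `|frc (q1%:R * v i 0) - frc (q2%:R * v i 0)| < e) ->
  exists q : nat, (0 < q)%N /\ exists r : 'cV[int]_p,
     forall i, `|q%:R * v i 0 - (r i 0)%:~R| < e.
Proof.
move=> lt12 H; exists (q2 - q1)%N; split; first by rewrite subn_gt0.
exists (\col_i (Num.floor (q2%:R * v i 0) - Num.floor (q1%:R * v i 0))).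
move=> i; rewrite mxE -distrC; move: (H i); rewrite /frc natrB ?(ltnW lt12) //.
congr (`|_| < _); rewrite intrD intrN mulrBl; lra.
Qed.

Lemma dirichlet (R : realType) (p : nat) (v : 'cV[R]_p) (e : R) : 0 < e ->
  exists q : nat, (0 < q)%N /\ exists r : 'cV[int]_p,
     forall i, `|q%:R * v i 0 - (r i 0)%:~R| < e.
Proof.
move=> e0.
set K' := Num.truncn (e^-1).
have Ke : (K'.+1%:R)^-1 < e.
  by rewrite -(invrK e) ltf_pV2 ?posrE ?ltr0Sn ?invr_gt0 // truncnS_gt.
set g := fun (q : nat) (i : 'I_p) => Num.truncn (K'.+1%:R * frc (q%:R * v i 0)).
have glt : forall q i, (g q i < K'.+1)%N.
  move=> q i; rewrite /g truncn_lt_nat ?mulr_ge0 ?frc_ge0 //.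
  by rewrite -[X in _ < X]mulr1 ltr_pM2l ?ltr0Sn // frc_lt1.
pose f := fun q : 'I_(K'.+1 ^ p).+1 => [ffun i => (inord (g q i) : 'I_K'.+1)].
have ninj : ~ injective f.
  move=> /leq_card; rewrite card_ffun !card_ord; by rewrite ltnn.
have [q1 [q2 [Ef Nq]]] : exists q1 q2, f q1 = f q2 /\ q1 <> q2.
  apply: contrapT => HH; apply: ninj => x y Exy; apply: contrapT => Nxy; apply: HH.
  by exists x, y.
have Hi : forall i, `|frc ((q1 : nat)%:R * v i 0) - frc ((q2 : nat)%:R * v i 0)| < e.
  move=> i; have := congr1 (fun F : {ffun 'I_p -> 'I_K'.+1} => nat_of_ord (F i)) Ef; rewrite /f /= !ffunE.
  rewrite !inordK ?glt // => Eg.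
  have := trunc_close (mulr_ge0 (ler0n _ K'.+1) (frc_ge0 _))
                      (mulr_ge0 (ler0n _ K'.+1) (frc_ge0 _)) Eg.
  rewrite -mulrBr normrM ger0_norm ?ler0n // => H1.
  apply: le_lt_trans Ke; rewrite -(ler_pM2l (ltr0Sn _ K')) mulfV ?pnatr_eq0 //.
  exact: ltW.
case: (ltngtP q1 q2) => [lt12|lt21|/val_inj E]; last by [].
  exact: (dirichlet_aux lt12 Hi).
apply: (dirichlet_aux lt21) => i; rewrite distrC; exact: Hi.
Qed.

Lemma ppZ (R : realType) n m (a : R) (x : 'cV[R]_(n + m)) :
  pi_par (a *: x) = a *: pi_par x.
Proof. exact: linearZ. Qed.


Lemma mulmxMn' (R : realType) p q (Q : 'M[R]_(p, q)) (x : 'cV[R]_q) N :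
  Q *m (x *+ N) = (Q *m x) *+ N.
Proof.
by elim: N => [|N IH]; rewrite ?mulr0n ?mulmx0 // !mulrS mulmxDr IH.
Qed.

Unset Implicit Arguments. Set Strict Implicit.

Theorem proposition2 (R : realType) (n m : nat) (Hn : (1 <= n)%N) (Hm : (1 <= m)%N)
    (L : 'M[R]_(n + m)) (W : set 'cV[R]_m) (A : 'M[R]_n) :
  L \in unitmx ->
  generic_cps L ->
  admissible_window W ->
  (fun x => A *m x) @` cps_set L W `<=` cps_set L W ->
  ((fun x => A *m x) @` (@pi_par R n m @` lattice L) `<=` @pi_par R n m @` lattice L) /\
  (exists C : 'M[int]_(n + m), exists B : 'M[R]_m,
     block_mx A 0 0 B *m L = L *m intmx R C /\
     forall (C' : 'M[int]_(n + m)) (B' : 'M[R]_m),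
       block_mx A 0 0 B' *m L = L *m intmx R C' -> C' = C /\ B' = B).
Proof.
move=> Lu [inj_par inj_perp dens] [Wb Wint Wne] AS.
have [c Wc] : exists c, (W°) c.
  apply: contrapT => H; case: Wne => x; rewrite -Wint.
  have -> : W° = set0 by apply/seteqP; split => y // Wy; apply: H; exists y.
  by rewrite closure0.
have [d d0 Hd] : exists2 d : R, 0 < d & forall y, `|c - y| < d -> W y.
  move: Wc; rewrite /interior /= => /nbhs_ballP [e /= e0 He].
  by exists e => // y cy; apply: He; rewrite -ball_normE /=.
have [K HK] : exists K, forall x, W x -> `|x| <= K.
  case: Wb => M [_ HM]; exists (M + 1) => x Wx; apply: (HM (M+1)); [lra| exact: Wx].
have [l0 [Ll0 Hl0]] : exists l0, lattice L l0 /\ `|c - pi_perp l0| < d / 2.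
  have h2 : 0 < d / 2 by lra.
  have [g [[l0 Ll0 <-] Hg]] := @dense_near _ _ _ dens c (d / 2) h2.
  by exists l0.
have Wl0 : forall l, `|pi_perp l| < d / 2 -> W (pi_perp (l0 + l)).
  move=> l Hl; apply: Hd; rewrite pqD opprD addrA.
  by apply: (le_lt_trans (ler_normB _ _)); lra.
have Wl00 : W (pi_perp l0) by apply: Hd; lra.
have AS' : forall l, lattice L l -> W (pi_perp l) ->
    exists l', lattice L l' /\ W (pi_perp l') /\ A *m pi_par l = pi_par l'.
  move=> l Ll Wl; have H : cps_set L W (pi_par l) by exists l.
  have [l' [Ll' Wl'] E] := AS _ (ex_intro2 _ _ _ H erefl).
  by exists l'.
pose Good x := exists l', lattice L l' /\ A *m x = pi_par l'.
have GoodD : forall x y, Good x -> Good y -> Good (x + y).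
  move=> x y [l [Ll E]] [l' [Ll' E']]; exists (l + l'); split; first exact: lat_add.
  by rewrite mulmxDr E E' ppD.
have GoodB : forall x y, Good x -> Good y -> Good (x - y).
  move=> x y [l [Ll E]] [l' [Ll' E']]; exists (l - l'); split; first exact: lat_sub.
  by rewrite mulmxBr E E' ppB.
have small : forall l, lattice L l -> `|pi_perp l| < d / 2 -> Good (pi_par l).
  move=> l Ll Hl.
  have -> : pi_par l = pi_par (l0 + l) - pi_par l0 by rewrite ppD [_ + pi_par l]addrC addrK.
  apply: GoodB.
    have [l' [Ll' [_ E]]] := AS' _ (lat_add Ll0 Ll) (Wl0 _ Hl); by exists l'.
  have [l' [Ll' [_ E]]] := AS' _ Ll0 Wl00; by exists l'.
have Gk : forall k : nat, forall l, lattice L l ->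
    `|pi_perp l| < k.+1%:R * (d / 4) -> Good (pi_par l).
  elim => [|k IH] l Ll Hl.
    by apply: small => //; move: Hl; rewrite mul1r; lra.
  set v := pi_perp l.
  set K1 : R := k.+1%:R.
  have K2E : k.+2%:R = K1 + 1 by rewrite /K1 -natr1.
  have K1ge : 1 <= K1 by rewrite /K1 ler1n.
  set b : R := (K1 + 1)^-1.
  have K10 : 0 < K1 + 1 by lra.
  have hb : (K1 + 1) * b = 1 by rewrite /b mulfV // gt_eqF.
  have b0 : 0 < b by rewrite /b invr_gt0; lra.
  have b1 : b <= 1 / 2 by clearbody b; nra.
  have nv := normr_ge0 v.
  rewrite K2E in Hl.
  have h1 : b * `|v| < d / 4.
    have : b * `|v| < b * ((K1 + 1) * (d / 4)) by rewrite ltr_pM2l.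
    by rewrite mulrA [b * (K1 + 1)]mulrC hb mul1r.
  have h2 : (1 - b) * `|v| < K1 * (d / 4).
    have : (1 - b) * `|v| < (1 - b) * ((K1 + 1) * (d / 4)).
      by rewrite ltr_pM2l //; lra.
    have E : (1 - b) * (K1 + 1) = K1 by rewrite mulrBl mul1r mulrC hb addrK.
    by move=> H; apply: (lt_le_trans H); rewrite !mulrA E.
  set eps := Num.min (d / 4) (K1 * (d / 4) - (1 - b) * `|v|).
  have eps0 : 0 < eps by rewrite lt_min; apply/andP; split; lra.
  have e1 : eps <= d / 4 by rewrite ge_min lexx.
  have e2 : eps <= K1 * (d / 4) - (1 - b) * `|v| by rewrite ge_min lexx orbT.
  have [g [[p Lp <-] Hp]] := @dense_near _ _ _ dens ((1 - b) *: v) eps eps0.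
  have -> : l = (l - p) + p by rewrite subrK.
  rewrite ppD; apply: GoodD; last first.
    apply: IH => //.
    have -> : pi_perp p = (1 - b) *: v - ((1 - b) *: v - pi_perp p).
      by rewrite opprB addrC subrK.
    apply: (le_lt_trans (ler_normB _ _)); rewrite normrZ ger0_norm; last lra.
    rewrite /K1 in h2 e2 *; lra.
  apply: small; first exact: lat_sub.
  have -> : pi_perp (l - p) = b *: v + ((1 - b) *: v - pi_perp p).
    by rewrite pqB -/v addrA -scalerDl [b + _]addrC subrK scale1r.
  apply: (le_lt_trans (ler_normD _ _)); rewrite normrZ ger0_norm; last lra.
  lra.
have Gall : forall l, lattice L l -> Good (pi_par l).
  move=> l Ll; apply: (Gk (Num.truncn (`|pi_perp l| / (d / 4)))) => //.
  rewrite -ltr_pdivrMr; last lra.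
  exact: truncnS_gt.
split.
  move=> _ [_ [l Ll <-] <-]; have [l' [Ll' E]] := Gall l Ll.
  by exists l'; rewrite // E.
have [cf Hcf] : exists cf : 'I_(n + m) -> 'cV[int]_(n + m), forall j,
    A *m pi_par (L *m delta_mx j 0) = pi_par (L *m intmx R (cf j)).
  have H : forall j : 'I_(n + m), exists r : 'cV[int]_(n + m),
      A *m pi_par (L *m delta_mx j 0) = pi_par (L *m intmx R r).
    move=> j; have [l' [[r ->] E]] := Gall _ (lat_pt L (delta_mx j 0)).
    by exists r; rewrite -E intmx_delta.
  have [f Hf] := boolp.choice H; by exists f.
set C : 'M[int]_(n + m) := \matrix_(i, j) cf j i 0.
have colC : forall j, col j C = cf j.
  by move=> j; apply/matrixP => i k; rewrite !mxE (ord1 k).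
have topC : A *m usubmx L = usubmx L *m intmx R C.
  apply: mx_eq_cols => j; rewrite -!mulmxA col_intmx colC !mul_usub_mx.
  exact: Hcf.
set Q := L *m intmx R C *m invmx L.
have QL : Q *m L = L *m intmx R C by rewrite /Q mulmxKV.
have uQ : usubmx Q = row_mx A 0.
  rewrite /Q -!mul_usub_mx -topC -mulmxA mul_usub_mx mulmxV // scalar_mx_block.
  by rewrite block_mxEv col_mxKu mul_mx_row mulmx1 mulmx0.
set Q21 := dlsubmx Q.
set Q22 := drsubmx Q.
have Qblk : Q = block_mx A 0 Q21 Q22.
  rewrite -[Q in LHS]submxK; congr block_mx.
    by rewrite /ulsubmx uQ row_mxKl.
  by rewrite /ursubmx uQ row_mxKr.
have ppQ : forall x, pi_par (Q *m x) = A *m pi_par x.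
  move=> x; rewrite /pi_par -mul_usub_mx uQ -{1}(vsubmxK x) mul_row_col.
  by rewrite mul0mx addr0.
have pqQ : forall x, pi_perp (Q *m x) = Q21 *m pi_par x + Q22 *m pi_perp x.
  move=> x; rewrite /pi_perp -mul_dsub_mx Qblk block_mxEv col_mxKd.
  by rewrite -{1}(vsubmxK x) mul_row_col.
have latQ : forall l, lattice L l -> lattice L (Q *m l).
  move=> _ [r ->]; exists (C *m r).
  by rewrite mulmxA QL intmxM mulmxA.
have keyW : forall l, lattice L l -> W (pi_perp l) -> W (pi_perp (Q *m l)).
  move=> l Ll Wl; have [l' [Ll' [Wl' E]]] := AS' l Ll Wl.
  have -> : Q *m l = l'.
    have h1 : Q *m l \in lattice L by apply/mem_set; exact: latQ.
    have h2 : l' \in lattice L by apply/mem_set.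
    by apply: (inj_par _ _ h1 h2); rewrite ppQ.
  exact: Wl'.
have bound1 : forall l, lattice L l -> `|pi_perp l| < d / 2 -> `|pi_perp (Q *m l)| <= K + K.
  move=> l Ll Hl.
  have -> : pi_perp (Q *m l) = pi_perp (Q *m (l0 + l)) - pi_perp (Q *m l0).
    by rewrite mulmxDr pqD [_ + pi_perp (Q *m l)]addrC addrK.
  apply: (le_trans (ler_normB _ _)); apply: lerD; apply: HK.
    by apply: keyW; [exact: lat_add | exact: Wl0].
  exact: keyW.
have boundN : forall (N : nat) l, lattice L l -> N%:R * `|pi_perp l| < d / 2 ->
    N%:R * `|pi_perp (Q *m l)| <= K + K.
  move=> N l Ll Hl.
  have := bound1 (l *+ N) (lat_natmul N Ll).
  rewrite mulmxMn' !pqMn !normrMn -(mulr_natl `|pi_perp l|).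
  by rewrite -(mulr_natl `|pi_perp (Q *m l)|); apply.
have K0 : 0 <= K by apply: le_trans (HK _ Wl00).
have Q21z : Q21 = 0.
  apply: contrapT => NZ.
  have [i [j Hij]] : exists i j, Q21 i j != 0.
    apply: contrapT => H; apply: NZ; apply/matrixP => i j; rewrite [X in _ = X]mxE.
    apply/eqP; apply: contrapT => Hnz; apply: H; exists i, j; by apply/negP.
  set eta := `|Q21 i j|.
  have eta0 : 0 < eta by rewrite normr_gt0.
  pose x : 'cV[R]_n := delta_mx j 0.
  pose v := invmx L *m col_mx x 0.
  have Lv : L *m v = col_mx x 0 by rewrite /v mulKVmx.
  clearbody v.
  set T := K + K + mxc Q22 * (d / 2).
  have T0 : 0 <= T by rewrite /T; have := mxc_ge0 Q22; nra.
  set N := (Num.truncn (T * 2 / eta)).+1.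
  have N0 : 0 < N%:R :> R by rewrite ltr0n.
  have HN' : T < N%:R * (eta / 2).
    have := truncnS_gt (T * 2 / eta); rewrite -/N ltr_pdivrMr // => HN.
    rewrite mulrA; lra.
  set cc := mxc (dsubmx L) + mxc Q21 * mxc (usubmx L) + 1.
  have cc1 : 1 <= cc.
    by rewrite /cc; have := mxc_ge0 (dsubmx L); have := mxc_ge0 Q21; have := mxc_ge0 (usubmx L); nra.
  set e0 := Num.min (d / 2 / N%:R) (eta / 2).
  have e00 : 0 < e0 by rewrite lt_min divr_gt0 //=; lra.
  have e01 : e0 <= d / 2 / N%:R by rewrite ge_min lexx.
  have e02 : e0 <= eta / 2 by rewrite ge_min lexx orbT.
  set eps := e0 / cc.
  have eps0 : 0 < eps by rewrite divr_gt0 //; lra.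
  have epsc : cc * eps = e0 by rewrite /eps mulrC divfK // gt_eqF //; lra.
  have [q [q0 [r Hr]]] := @dirichlet _ _ v eps eps0.
  pose w := intmx R r - q%:R *: v.
  have Hw : `|w| < eps.
    apply: norm_lt_entries => // a b; rewrite (ord1 b) !mxE distrC; exact: Hr.
  set l := L *m intmx R r.
  have lE : l = L *m w + q%:R *: col_mx x 0.
    by rewrite /w mulmxBr -scalemxAr Lv subrK.
  have pql : pi_perp l = dsubmx L *m w.
    by rewrite lE pqD pqZ /pi_perp col_mxKd scaler0 addr0 mul_dsub_mx.
  have ppl : pi_par l = usubmx L *m w + q%:R *: x.
    by rewrite lE ppD ppZ /pi_par col_mxKu mul_usub_mx.
  have nw := normr_ge0 w.
  have Hpql : `|pi_perp l| <= mxc (dsubmx L) * eps.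
    rewrite pql; apply: (le_trans (mxc_bound _ _)); apply: ler_wpM2l; [exact: mxc_ge0 | exact: ltW].
  have HpqN : N%:R * `|pi_perp l| < d / 2.
    rewrite mulrC -ltr_pdivlMr //; apply: lt_le_trans e01; rewrite -epsc.
    apply: le_lt_trans Hpql _; rewrite ltr_pM2r // /cc.
    have := mxc_ge0 Q21; have := mxc_ge0 (usubmx L); nra.
  have B1 := boundN N l (lat_pt L r) HpqN.
  have E21 : Q21 *m pi_par l = pi_perp (Q *m l) - Q22 *m pi_perp l by rewrite pqQ addrK.
  have Hup : `|Q21 *m pi_par l| <= `|pi_perp (Q *m l)| + mxc Q22 * `|pi_perp l|.
    rewrite E21; apply: (le_trans (ler_normB _ _)); rewrite lerD2l; exact: mxc_bound.
  have Hup2 : N%:R * `|Q21 *m pi_par l| <= T.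
    apply: (le_trans (ler_wpM2l (ltW N0) Hup)); rewrite mulrDr /T.
    apply: lerD => //; rewrite mulrCA; apply: ler_wpM2l; [exact: mxc_ge0 | exact: ltW].
  have Hup3 : `|Q21 *m pi_par l| < eta / 2.
    by rewrite -(ltr_pM2l N0); apply: le_lt_trans Hup2 HN'.
  have Hent : (Q21 *m pi_par l) i 0 = (Q21 *m (usubmx L *m w)) i 0 + q%:R * Q21 i j.
    by rewrite ppl mulmxDr -scalemxAr /x -colE !mxE.
  have Hlow : `|(Q21 *m (usubmx L *m w)) i 0| < eta / 2.
    apply: (le_lt_trans (entry_le_norm _ _ _)).
    apply: (le_lt_trans (mxc_bound _ _)).
    apply: (@le_lt_trans _ _ (mxc Q21 * (mxc (usubmx L) * eps))).
      apply: ler_wpM2l; first exact: mxc_ge0.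
      apply: (le_trans (mxc_bound _ _)); apply: ler_wpM2l; [exact: mxc_ge0 | exact: ltW].
    apply: lt_le_trans e02; rewrite -epsc mulrA ltr_pM2r // /cc.
    have := mxc_ge0 (dsubmx L); lra.
  have Hq : eta <= `|q%:R * Q21 i j|.
    rewrite normrM ger0_norm ?ler0n // -{1}(mul1r eta) ler_wpM2r //; [exact: ltW | by rewrite ler1n].
  have := entry_le_norm (Q21 *m pi_par l) i 0; rewrite Hent => Hb.
  have := ler_normB ((Q21 *m (usubmx L *m w)) i 0 + q%:R * Q21 i j) ((Q21 *m (usubmx L *m w)) i 0).
  rewrite addrAC subrr add0r => H2.
  have : `|q%:R * Q21 i j| < eta by lra.
  lra.
exists C, Q22; split.
  by rewrite -QL Qblk Q21z.
move=> C' B' E'.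
have topC' : A *m usubmx L = usubmx L *m intmx R C'.
  have := congr1 usubmx E'; rewrite -!mul_usub_mx block_mxEv col_mxKu.
  by rewrite -{1}(vsubmxK L) mul_row_col mul0mx addr0.
have CC : C' = C.
  apply: (@intmx_inj R); apply: mx_eq_cols => j; rewrite !col_intmx.
  have h : pi_par (L *m intmx R (col j C')) = pi_par (L *m intmx R (col j C)).
    by rewrite /pi_par -!mul_usub_mx -!col_intmx !mulmxA -topC' -topC.
  have E2 := inj_par _ _ (mem_set (lat_pt L _)) (mem_set (lat_pt L _)) h.
  by have := congr1 (mulmx (invmx L)) E2; rewrite !mulKmx.
split => //.
have EB : block_mx A 0 0 B' = block_mx A 0 0 Q22.
  apply: (can_inj (mulmxK Lu)); rewrite /= E' CC -QL Qblk Q21z //.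
by have := congr1 drsubmx EB; rewrite !block_mxKdr.
Qed.
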